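(* Let $\iota:\emptyset\to\{\bullet\}$; let $q:\{\bullet_1,\bullet_2\}\to\{\bullet\}$ be the map from the two-point discrete space to a point; let $m:\{a\}\to\{a,b\}$ be the inclusion of a point into the two-point antidiscrete space; and let $\tau:S\to\{a,b\}$ be the identity-on-points map from the Sierpinski space $S=\{a,b\}$ (open sets $\emptyset,\{a\},S$) to the antidiscrete space on $\{a,b\}$. Then, in $\mathrm{Top}$, $\{\iota\}^{lrrrl}=\{m,\tau\}^l=\{q\}^{rl}$, and this is the class of quotient maps, i.e. surjective continuous maps $p:A\to B$ such that $B$ carries the quotient topology (a subset $V\subseteq B$ is open iff $p^{-1}(V)$ is open).
   Context: For continuous maps $f:A\to B$, $g:C\to D$, $f\pitchfork g$ means: for all continuous $t:A\to C$, $b:B\to D$ with $g\circ t=b\circ f$ there is continuous $d:B\to C$ with $d\circ f=t$, $g\circ d=b$. For a class $P$, $P^l=\{f: f\pitchfork g\ \forall g\in P\}$, $P^r=\{g: f\pitchfork g\ \forall f\in P\}$; for a word $w$ in $l,r$, $P^w$ applies these operations from left to right. *)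

(* Defs.v *)
From HB Require Import structures.
From mathcomp Require Import all_boot all_order.
From mathcomp Require Import boolp classical_sets topology.
Set Implicit Arguments. Unset Strict Implicit. Unset Printing Implicit Defensive.
Local Open Scope classical_set_scope.

Definition mclass := forall (A B : topologicalType), (A -> B) -> Prop.

Definition lifts (A B C D : topologicalType) (f : A -> B) (g : C -> D) : Prop :=
  forall (t : A -> C) (b : B -> D), continuous t -> continuous b ->
    g \o t = b \o f ->
    exists d : B -> C, [/\ continuous d, d \o f = t & g \o d = b].

Definition lorth (P : mclass) : mclass := fun A B f =>
  continuous f /\ forall (C D : topologicalType) (g : C -> D), P C D g -> lifts f g.
Definition rorth (P : mclass) : mclass := fun C D g =>
  continuous g /\ forall (A B : topologicalType) (f : A -> B), P A B f -> lifts f g.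

Definition sing (A0 B0 : topologicalType) (f0 : A0 -> B0) : mclass :=
  fun A B f => existT (fun AB : topologicalType * topologicalType => AB.1 -> AB.2)
                      (A, B) f
             = existT (fun AB : topologicalType * topologicalType => AB.1 -> AB.2)
                      (A0, B0) f0.
Definition union2 (P Q : mclass) : mclass := fun A B f => P A B f \/ Q A B f.

Definition emptysp : topologicalType := discrete_topology void.
Definition pointsp : topologicalType := discrete_topology unit.
Definition twodisc : topologicalType := discrete_topology bool.

(* the two-point antidiscrete space {a,b}, with a = true, b = false *)
Definition antidisc : Type := bool.
HB.instance Definition _ := Choice.copy antidisc bool.
Definition antidisc_op (A : set antidisc) : Prop := A true <-> A false.
Lemma antidisc_opT : antidisc_op setT. Proof. by []. Qed.
Lemma antidisc_opI : setI_closed antidisc_op.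
Proof. by move=> A B HA HB; split=> -[Ha Hb]; split; (apply/HA || apply/HB). Qed.
Lemma antidisc_opU (I : Type) (f : I -> set antidisc) :
  (forall i, antidisc_op (f i)) -> antidisc_op (\bigcup_i f i).
Proof. by move=> H; split=> -[i _ /(H i) ?]; exists i. Qed.
HB.instance Definition _ := isOpenTopological.Build antidisc
  antidisc_opT antidisc_opI antidisc_opU.

(* the Sierpinski space S = {a,b} with open sets ∅, {a}, S (a = true) *)
Definition sierp : Type := bool.
HB.instance Definition _ := Choice.copy sierp bool.
Definition sierp_op (A : set sierp) : Prop := A false -> A true.
Lemma sierp_opT : sierp_op setT. Proof. by []. Qed.
Lemma sierp_opI : setI_closed sierp_op.
Proof. by move=> A B HA HB [/HA ? /HB ?]. Qed.
Lemma sierp_opU (I : Type) (f : I -> set sierp) :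
  (forall i, sierp_op (f i)) -> sierp_op (\bigcup_i f i).
Proof. by move=> H [i _ /(H i) ?]; exists i. Qed.
HB.instance Definition _ := isOpenTopological.Build sierp
  sierp_opT sierp_opI sierp_opU.

Definition iotamap : emptysp -> pointsp := fun x => match x with end.
Definition qmap : twodisc -> pointsp := fun _ => tt.
Definition mmap : pointsp -> antidisc := fun _ => true.
Definition tau : sierp -> antidisc := fun x => x.

Definition quotient_map (A B : topologicalType) (p : A -> B) : Prop :=
  [/\ continuous p, (forall y : B, exists x : A, p x = y) &
      forall V : set B, open V <-> open (p @^-1` V)].

Lemma sierp_openE (U : set sierp) :
  open U <-> [\/ U = set0, U = [set true] | U = setT].
Proof.
change (sierp_op U <-> [\/ U = set0, U = [set true] | U = setT]).
split.
- move=> H; case: (pselect (U true)) => Ht; case: (pselect (U false)) => Hf.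
  + apply: Or33; apply/seteqP; split=> // -[]//.
  + apply: Or32; apply/seteqP; split=> -[]//= _; exact: Ht.
  + by exfalso; exact/Ht/H.
  + apply: Or31; apply/seteqP; split=> -[]//.
- by case=> ->; rewrite /sierp_op //=.
Qed.
Lemma antidisc_openE (U : set antidisc) : open U <-> U = set0 \/ U = setT.
Proof.
change (antidisc_op U <-> U = set0 \/ U = setT).
split.
- move=> [H1 H2]; case: (pselect (U true)) => Ht.
  + by right; apply/seteqP; split=> // -[] _ //; exact: H1.
  + by left; apply/seteqP; split=> // -[] // /H2.
- by case=> ->.
Qed.
Arguments lorth P A B f : clear implicits.
Arguments rorth P A B f : clear implicits, rename.
Arguments sing {A0 B0} f0 A B f.
Arguments union2 P Q A B f : clear implicits.

(* Main.v *)
Require Import Defs.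
From mathcomp Require Import all_boot all_order.
From mathcomp Require Import boolp classical_sets topology.
Set Implicit Arguments. Unset Strict Implicit. Unset Printing Implicit Defensive.
Local Open Scope classical_set_scope.

Lemma contc (R S T : topologicalType) (f : R -> S) (g : S -> T) :
  continuous f -> continuous g -> continuous (g \o f).
Proof. by move=> fc gc x; apply: continuous_comp; [exact: fc|exact: gc]. Qed.

Lemma id_cont (T : topologicalType) : continuous (@id T).
Proof. by apply/continuousP => U. Qed.

Lemma twodisc_cont (T : topologicalType) (t : twodisc -> T) : continuous t.
Proof. by apply/continuousP => U _; exact: discrete_open. Qed.

Lemma emptysp_cont (T : topologicalType) (t : emptysp -> T) : continuous t.
Proof. by apply/continuousP => U _; exact: discrete_open. Qed.

Lemma antidisc_cont (T : topologicalType) (t : T -> antidisc) : continuous t.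
Proof.
apply/continuousP => U /antidisc_openE [->|->].
  by rewrite preimage_set0; exact: open0.
by rewrite preimage_setT; exact: openT.
Qed.

Lemma singE (A0 B0 : topologicalType) (f0 : A0 -> B0)
  (Q : forall C D : topologicalType, (C -> D) -> Prop) :
  Q A0 B0 f0 -> forall C D g, sing f0 C D g -> Q C D g.
Proof.
move=> H C D g E.
pose Q' (s : {AB : topologicalType * topologicalType & AB.1 -> AB.2}) :=
  Q (projT1 s).1 (projT1 s).2 (projT2 s).
change (Q' (existT _ (C, D) g)). rewrite /sing in E; rewrite E. exact: H.
Qed.

Lemma lorth_sing (A0 B0 : topologicalType) (f0 : A0 -> B0) (A B : topologicalType) (f : A -> B) :
  lorth (sing f0) A B f <-> continuous f /\ lifts f f0.
Proof.
split=> [[fc H]|[fc H]]; first by split=> //; apply: H.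
split=> // C D g; exact: (singE (Q := fun C D g => lifts f g)).
Qed.

Lemma rorth_sing (A0 B0 : topologicalType) (f0 : A0 -> B0) (A B : topologicalType) (f : A -> B) :
  rorth (sing f0) A B f <-> continuous f /\ lifts f0 f.
Proof.
split=> [[fc H]|[fc H]]; first by split=> //; apply: H.
split=> // C D g; exact: (singE (Q := fun C D g => lifts g f)).
Qed.

Lemma pt_eq (x y : unit) : x = y. Proof. by case: x; case: y. Qed.

Lemma L_qr (C D : topologicalType) (h : C -> D) :
  lifts qmap h <-> injective h.
Proof.
split.
- move=> H x1 x2 e.
  have := H (fun b : twodisc => if b then x1 else x2) (fun _ : pointsp => h x1)
    (@twodisc_cont _ _) (@cst_continuous _ _ _).
  case.
    by apply/funext => -[]//=.
  move=> d [_ dq _].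
  have := congr1 (fun k => k true) dq; have := congr1 (fun k => k false) dq.
  by rewrite /= => <- <-.
- move=> hinj t b _ _ sq; exists (fun _ => t true); split.
  + exact: cst_continuous.
  + apply/funext => x; apply: hinj.
    have := congr1 (fun k => k x) sq; have := congr1 (fun k => k true) sq.
    by rewrite /= => -> ->.
  + apply/funext => y /=; have := congr1 (fun k => k true) sq; rewrite /= => ->; congr b; exact: (pt_eq (qmap true : unit) (y : unit)).
Qed.

Lemma L_quot_lift (A B : topologicalType) (f : A -> B) (C D : topologicalType) (h : C -> D) :
  quotient_map f -> injective h -> lifts f h.
Proof.
move=> [fc fsurj fop] hinj t b tc bc sq.
have [s fs] := choice fsurj.
have hsq x : h (t x) = b (f x) by exact: (congr1 (fun k => k x) sq).
have dft : (t \o s) \o f = t.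
  by apply/funext => x /=; apply: hinj; rewrite !hsq fs.
exists (t \o s); split => //.
- apply/continuousP => U Uo; apply/fop.
  have -> : f @^-1` ((t \o s) @^-1` U) = t @^-1` U by rewrite -[in RHS]dft.
  exact: (continuousP _).1 tc _ Uo.
- by apply/funext => y /=; rewrite hsq fs.
Qed.

Lemma L_mtau (A B : topologicalType) (f : A -> B) :
  continuous f -> lifts f mmap -> lifts f tau -> quotient_map f.
Proof.
move=> fc Hm Ht; split => //.
- move=> y.
  have := Hm (fun _ : A => tt) (fun z : B => `[< exists x, f x = z >] : antidisc)
    (@cst_continuous _ _ _) (@antidisc_cont _ _).
  case.
    apply/funext => x /=; apply/esym/asboolP; by exists x.
  move=> d [_ _ gd].
  have := congr1 (fun k => k y) gd => /= /esym.
  by move/asboolP.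
- move=> V; split; first by move/((continuousP _).1 fc).
  move=> H.
  have tc : continuous (fun x : A => `[< V (f x) >] : sierp).
    apply/continuousP => U /sierp_openE [->|->|->].
    + by rewrite preimage_set0; exact: open0.
    + have -> : (fun x : A => `[< V (f x) >] : sierp) @^-1` [set true] = f @^-1` V.
        by apply/seteqP; split => x /=; [move=> /asboolP|move=> ?; apply/asboolP].
      exact: H.
    + by rewrite preimage_setT; exact: openT.
  have := Ht (fun x : A => `[< V (f x) >] : sierp) (fun y : B => `[< V y >] : antidisc)
     tc (@antidisc_cont _ _) erefl.
  move=> [d [dc _ gd]].
  have -> : V = d @^-1` [set true].
    apply/seteqP; split => y /=.
      by move=> Vy; have := congr1 (fun k => k y) gd; rewrite /= /tau => ->; apply/asboolP.
    by move=> e; have := congr1 (fun k => k y) gd; rewrite /= /tau e => /esym/asboolP.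
  apply: ((continuousP _).1 dc); apply/sierp_openE; exact: Or32.
Qed.

Lemma L_split (C D : topologicalType) (g : C -> D) (X Y : topologicalType) (h : X -> Y) :
  (exists s : D -> C, continuous s /\ g \o s = id) -> injective h -> lifts g h.
Proof.
move=> [s [sc gs]] hinj t b tc bc sq.
have hsq x : h (t x) = b (g x) by exact: (congr1 (fun k => k x) sq).
have gsy y : g (s y) = y by exact: (congr1 (fun k => k y) gs).
exists (t \o s); split.
- exact: contc.
- by apply/funext => c /=; apply: hinj; rewrite !hsq gsy.
- by apply/funext => y /=; rewrite hsq gsy.
Qed.

Definition P1 := lorth (sing iotamap).
Definition P2 := rorth P1.
Definition P3 := rorth P2.
Definition P4 := rorth P3.
Arguments P1 : clear implicits. Arguments P2 : clear implicits.
Arguments P3 : clear implicits. Arguments P4 : clear implicits.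

Lemma P3q : P3 _ _ qmap.
Proof.
split; first exact: twodisc_cont.
move=> C D g [gc Hg].
case: (pselect (inhabited C)) => [[c0]|nC].
- have P1g : P1 C D g.
    split => //; apply: (singE (Q := fun C' D' g' => lifts g g')).
    by move=> t b' _ _ _; case: (t c0).
  have [d [dc dg gd]] := Hg _ _ _ P1g id id (@id_cont _) (@id_cont _) erefl.
  move=> t b tc bc sq; exists (t \o d); split.
  + exact: contc.
  + by apply/funext => c /=; have := congr1 (fun k => k c) dg => /= ->.
  + by apply/funext => y; exact: pt_eq.
- move=> t b tc bc sq; exists (fun _ => false); split.
  + exact: cst_continuous.
  + by apply/funext => c; exfalso; apply: nC; exact: (inhabits c).
  + by apply/funext => y; exact: pt_eq.
Qed.

Lemma P3split (C D : topologicalType) (g : C -> D) : P3 C D g ->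
  exists s : D -> C, continuous s /\ g \o s = id.
Proof.
move=> [gc Hg].
pose f0 : emptysp -> D := fun x => match x with end.
have P2f0 : P2 _ _ f0.
  split; first exact: emptysp_cont.
  move=> X Y h [hc Hh].
  have hi : lifts h iotamap by apply: Hh.
  move=> t b tc bc sq.
  have := hi t (fun _ => tt) tc (@cst_continuous _ _ _).
  case.
    by apply/funext => x; case: (t x).
  move=> d' [d'c _ _]; exists d'; split => //.
  + by apply/funext => x; case: (t x).
  + by apply/funext => y; case: (d' y).
have := Hg _ _ _ P2f0 (fun x : emptysp => match x with end) id
  (@emptysp_cont _ _) (@id_cont _).
case.
  by apply/funext => x; case: x.
by move=> d [dc _ gd]; exists d.
Qed.

Lemma P4inj (X Y : topologicalType) (h : X -> Y) : P4 X Y h -> injective h.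
Proof. by move=> [hc Hh]; apply/L_qr; apply: Hh; exact: P3q. Qed.

Lemma mmap_inj : injective mmap. Proof. by move=> [] []. Qed.
Lemma tau_inj : injective tau. Proof. by move=> x y. Qed.

Lemma P4m : P4 _ _ mmap.
Proof.
split; first exact: cst_continuous.
move=> C D g /P3split Hs; exact: L_split Hs mmap_inj.
Qed.

Lemma P4t : P4 _ _ tau.
Proof.
split; first exact: antidisc_cont.
move=> C D g /P3split Hs; exact: L_split Hs tau_inj.
Qed.

Lemma union_Q (A B : topologicalType) (f : A -> B) :
  lorth (union2 (sing mmap) (sing tau)) A B f <-> quotient_map f.
Proof.
split.
- move=> [fc H]; apply: L_mtau => //; apply: H; [left|right]; exact: erefl.
- move=> Q; split; first by case: Q.
  move=> C D g [Hm|Ht].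
  + exact: (singE (Q := fun C D g => lifts f g)) (L_quot_lift Q mmap_inj) _ _ _ Hm.
  + exact: (singE (Q := fun C D g => lifts f g)) (L_quot_lift Q tau_inj) _ _ _ Ht.
Qed.

Lemma rq_Q (A B : topologicalType) (f : A -> B) :
  lorth (rorth (sing qmap)) A B f <-> quotient_map f.
Proof.
split.
- move=> [fc H]; apply: L_mtau => //; apply: H; apply/rorth_sing; split.
  + exact: cst_continuous.
  + exact/L_qr/mmap_inj.
  + exact: antidisc_cont.
  + exact/L_qr/tau_inj.
- move=> Q; split; first by case: Q.
  move=> C D g /rorth_sing [_ /L_qr hinj]; exact: L_quot_lift.
Qed.

Lemma P5_Q (A B : topologicalType) (f : A -> B) :
  lorth (rorth (rorth (rorth (lorth (sing iotamap))))) A B f <-> quotient_map f.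
Proof.
split.
- move=> [fc H]; apply: L_mtau => //; apply: H; [exact: P4m|exact: P4t].
- move=> Q; split; first by case: Q.
  move=> C D g /P4inj hinj; exact: L_quot_lift.
Qed.

Theorem mainTheorem18 :
  forall (A B : topologicalType) (f : A -> B),
    (lorth (rorth (rorth (rorth (lorth (sing iotamap))))) A B f
       <-> lorth (union2 (sing mmap) (sing tau)) A B f)
    /\ (lorth (union2 (sing mmap) (sing tau)) A B f
       <-> lorth (rorth (sing qmap)) A B f)
    /\ (lorth (rorth (sing qmap)) A B f <-> quotient_map f).
Proof.
move=> A B f; rewrite P5_Q union_Q rq_Q; tauto.
Qed.
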